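(* Let $n\in\mathbb{N}$, let $c=(c_{i,j})$ be an $n\times(n+1)$ matrix with entries in $\{0,1\}$, $\sigma_1,\ldots,\sigma_n>0$, and $\gamma_1,\ldots,\gamma_{n+1}>0$ with $\sum_jc_{i,j}\gamma_j>0$ for every $i$. Let $\boldsymbol{\Lambda}=(\Lambda_1,\ldots,\Lambda_{n+1})'$ have independent coordinates $\Lambda_j\sim Ga(\gamma_j,1)$. Let $W_{i,j}$, $i=1,\ldots,n$, $j=1,\ldots,n+1$, be random variables that are exponential with randomized rates, $W_{i,j}*\Lambda_j$: conditionally on $\boldsymbol{\Lambda}=(\lambda_1,\ldots,\lambda_{n+1})$, the $W_{i,j}$ are mutually independent and $W_{i,j}\sim Exp(\lambda_j)$. Set, for $i=1,\ldots,n$, \[ X_i=\sigma_i\min_{j\in\{1,\ldots,n+1\}:\,c_{i,j}\ne0}\left(W_{i,j}*\Lambda_j\right). \] Then $\mathbf{X}=(X_1,\ldots,X_n)'$ satisfies \[ \mathbf{P}[X_1>x_1,\ldots,X_n>x_n]=\prod_{j=1}^{n+1}\left(1+\sum_{i=1}^n\frac{c_{i,j}}{\sigma_i}x_i\right)^{-\gamma_j},\quad (x_1,\ldots,x_n)'\in(0,\infty)^n. \]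
   Context: $Exp(\lambda)$ is the exponential distribution with rate $\lambda$; $Ga(\gamma,1)$ is the gamma distribution with shape $\gamma$ and rate $1$. The mixture operator $*$: for a family $X_\lambda\sim C(\cdot;\lambda)$ and a random parameter $\Lambda\sim H$, $X_\lambda*\Lambda$ denotes the random variable $X_\Lambda$, i.e. with conditional law $C(\cdot;\lambda)$ given $\Lambda=\lambda$. *)

(* Defs.v *)
From HB Require Import structures.
From mathcomp Require Import all_boot all_order all_algebra.
From mathcomp Require Import all_classical all_reals all_analysis.
Set Implicit Arguments. Unset Strict Implicit. Unset Printing Implicit Defensive.
Import Order.TTheory GRing.Theory Num.Theory.
Local Open Scope classical_set_scope.
Local Open Scope ring_scope.

Definition Gamma_fun (R : realType) (g : R) : R :=
  fine (\int[lebesgue_measure]_(t in (`]0%R, +oo[%classic : set R))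
          (t `^ (g - 1) * expR (- t))%:E)%E.

Definition gamma_pdf (R : realType) (g : R) (x : R) : R :=
  if 0 < x then x `^ (g - 1) * expR (- x) / Gamma_fun g else 0.

(* Main.v *)
Require Import Defs.
From HB Require Import structures.
From mathcomp Require Import all_boot all_order all_algebra.
From mathcomp Require Import all_classical all_reals all_analysis.
From mathcomp Require Import exponential_distribution.
From mathcomp Require measurable_realfun ring.
Import Order.TTheory GRing.Theory Num.Theory.
Local Open Scope classical_set_scope.
Local Open Scope ring_scope.

Module Aux.
Import numFieldTopology.Exports.
Import measurable_realfun ring.
Section aux.
Context {R : realType}.
Local Notation mu := (@lebesgue_measure R).

Lemma preimage_scale_itv (k a b : R) : 0 < k ->
  (fun x : R => k * x) @^-1` `]a, b] = `]a / k, b / k]%classic.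
Proof.
move=> k0; apply/seteqP; split => x /=; rewrite !in_itv /=.
  by move=> /andP[ax xb]; rewrite ltr_pdivrMr // ler_pdivlMr // ![x * k]mulrC ax xb.
move=> /andP[ax xb]; rewrite ltr_pdivrMr // in ax; rewrite ler_pdivlMr // in xb.
by rewrite [k * x]mulrC ax xb.
Qed.


Lemma mscale_fun (k : R) : measurable_fun [set: measurableTypeR R]
  ((fun x : R => k * x) : measurableTypeR R -> measurableTypeR R).
Proof. have h : measurable_fun [set: R] (fun x : R => k * x) by apply: measurable_funM.
exact: h. Qed.

Lemma pushforward_scale (k : R) (A : set R) : 0 < k -> measurable A ->
  pushforward mu (fun x => k * x) A = ((k^-1)%:E * mu A)%E.
Proof.
move=> k0 mA.
pose pf := @measure_function_pushforward__canonical__measure_function_Measure _ _ _ _ _ mu _ (mscale_fun k).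
pose m := mscale (NngNum (ltW k0)) pf.
have : mu A = m A.
  apply: lebesgue_measure_unique => // _ [[a b]] _ <-.
  change (mu `]a, b] = (k%:E * mu ((fun x : R => (k * x)%R) @^-1` `]a, b]))%E).
  rewrite preimage_scale_itv //.
  rewrite !lebesgue_measure_itv /= !lte_fin ltr_pM2r ?invr_gt0 //.
  case: ifP => _; last by rewrite mule0.
  rewrite -!EFinD -EFinM; congr EFin.
  by rewrite -mulrBl mulrCA mulfV ?mulr1 // gt_eqF.
rewrite /m /mscale /= => ->; rewrite muleA -EFinM mulVf ?mul1e //.
by rewrite gt_eqF.
Qed.

Lemma integral_scale (k : R) (f : R -> \bar R) : 0 < k ->
  measurable_fun setT f -> (forall x, (0 <= f x)%E) ->
  (\int[mu]_x f (k * x)%R = (k^-1)%:E * \int[mu]_x f x)%E.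
Proof.
move=> k0 mf f0.
pose pf := @measure_function_pushforward__canonical__measure_function_Measure _ _ _ _ _ mu _ (mscale_fun k).
have -> : (\int[mu]_x f (k * x)%R = \int[pf]_x f x)%E.
  by rewrite (ge0_integral_pushforward (mscale_fun k)).
have kV0 : 0 <= k^-1 by rewrite invr_ge0 ltW.
rewrite (eq_measure_integral (mscale (NngNum kV0) mu)); last first.
  move=> B mB _; have h := pushforward_scale k B k0 mB. exact: h.
exact: (@ge0_integral_mscale _ _ R mu setT measurableT (NngNum kV0) f mf (fun x _ => f0 x)).
Qed.

Lemma cexpNM' (l : R) : continuous (fun z : R^o => expR (- l * z)).
Proof.
move=> z; apply: continuous_comp; last exact: continuous_expR.
by apply: continuousM => //; apply: (@continuousN _ R^o); exact: cst_continuous.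
Qed.

Lemma exp_tail (l a : R) : 0 < l -> 0 <= a ->
  (\int[mu]_(w in `]a, +oo[) (exponential_pdf l w)%:E = (expR (- l * a))%:E)%E.
Proof.
move=> l0 a0.
rewrite integral_itv_obnd_cbnd; last first.
  apply/measurable_EFinP/measurable_funTS; exact: measurable_exponential_pdf.
rewrite (@ge0_continuous_FTC2y _ _ (fun x => - expR (- l * x)) _ 0)//.
- by rewrite EFinN oppeK add0e.
- by move=> x _; apply: exponential_pdf_ge0; exact: ltW.
- apply: (@continuous_subspaceW R^o _ _ [set` `[0, +oo[%R]).
  + by apply: subset_itvr; rewrite bnd_simp.
  + exact: within_continuous_exponential_pdf.
- rewrite -oppr0; apply: cvgN.
  rewrite (_ : (fun x => expR (- l * x)) =
               (fun z => expR (- z)) \o (fun z => l * z)); last first.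
    by apply: eq_fun => x; rewrite mulNr.
  apply: (@cvg_comp _ _ _ _ _ _ (pinfty_nbhs R)); last exact: cvgr_expR.
  exact: gt0_cvgMry.
- by apply: cvgN; apply/cvg_at_right_filter; exact: cexpNM'.
- move=> x; rewrite in_itv/= andbT => ax.
  by apply: derive1_exponential_pdf; rewrite in_itv/= andbT (le_lt_trans a0 ax).
Qed.
End aux.
Section aux2.
Context {R : realType}.
Local Notation mu := (@lebesgue_measure R).

Definition hh (g u : R) : R := if 0 < u then u `^ (g - 1) * expR (- u) else 0.

Lemma hh_ge0 g u : 0 <= hh g u.
Proof. by rewrite /hh; case: ifP => // _; rewrite mulr_ge0 ?powR_ge0 ?expR_ge0. Qed.

Lemma measurable_hh g : measurable_fun setT (hh g).
Proof.
apply: measurable_fun_ifT.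
- by apply: measurable_fun_ltr.
- apply: measurable_funM; first exact: measurable_powR.
  by apply: measurableT_comp; [exact: measurable_expR | exact: measurable_funN].
- exact: measurable_cst.
Qed.

Definition II (g : R) := (\int[mu]_u (hh g u)%:E)%E.

Lemma Gamma_hh g : Gamma_fun g = fine (II g).
Proof.
rewrite /Gamma_fun integral_mkcond; congr fine; apply: eq_integral => u _.
rewrite patchE /hh; case: ifPn.
  by move=> /set_mem; rewrite /= in_itv /= andbT => ->.
move=> h; case: ifPn => // u0; case/negP: h; apply/mem_set.
by rewrite /= in_itv /= andbT.
Qed.

Lemma gamma_pdfE g l : gamma_pdf g l = hh g l / Gamma_fun g.
Proof. by rewrite /gamma_pdf /hh; case: ifP; rewrite ?mul0r. Qed.


Lemma factor_int (g s : R) (E : R -> \bar R) : 0 <= s ->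
  (forall l, 0 < l -> E l = (expR (- l * s))%:E) ->
  (\int[mu]_l ((gamma_pdf g l)%:E * E l) =
   ((Gamma_fun g)^-1 * (1 + s) `^ (- g))%:E * II g)%E.
Proof.
move=> s0 hE.
have a0 : 0 < 1 + s by rewrite ltr_pwDl.
have A0 : 0 < (1 + s) `^ (g - 1) by rewrite powR_gt0.
have G0 : 0 <= Gamma_fun g by rewrite Gamma_hh fine_ge0 // integral_ge0 // => u _; rewrite lee_fin hh_ge0.
pose C := (Gamma_fun g)^-1 / (1 + s) `^ (g - 1).
have C0 : 0 <= C by rewrite /C divr_ge0 ?invr_ge0 // ltW.
transitivity (\int[mu]_l (C%:E * (hh g ((1 + s) * l))%:E))%E.
  apply: eq_integral => l _; case: (ltP 0 l) => l0.
    rewrite hE // -EFinM; congr EFin.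
    rewrite gamma_pdfE /hh l0 mulr_gt0 // powRM ?ltW // /C.
    have -> : - ((1 + s) * l) = - l + - l * s by ring.
    rewrite expRD; move: (Gamma_fun g)^-1 => G.
    field; exact: lt0r_neq0.
  rewrite gamma_pdfE /hh ltNge l0 /= mul0r mul0e.
  rewrite ltNge (mulr_ge0_le0 (ltW a0) l0) /=.
  by change (0%E = (C * 0)%:E); rewrite mulr0.
rewrite ge0_integralZl_EFin //; last 2 first.
- by move=> x _; rewrite lee_fin hh_ge0.
- apply/measurable_EFinP; apply: measurableT_comp; first exact: measurable_hh.
  by apply: measurable_funM.
rewrite (integral_scale (1 + s) (fun u => (hh g u)%:E)) //; last 2 first.
- by apply/measurable_EFinP; exact: measurable_hh.
- by move=> u; rewrite lee_fin hh_ge0.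
rewrite muleA -EFinM; congr (_%:E * _)%E.
rewrite /C powRN -mulrA -invfM.
have -> : (1 + s) `^ g = (1 + s) `^ (g - 1) * (1 + s).
  rewrite -[X in _ = _ * X](powRr1 (ltW a0)) -powRD ?subrK //.
  by rewrite implybE (lt0r_neq0 a0) orbT.
by [].
Qed.

Definition Bset (b : bool) (y : R) : set R := if b then `]y, +oo[%classic else setT.

Lemma measurable_Bset b y : measurable (Bset b y).
Proof. by rewrite /Bset; case: b. Qed.

Lemma prod_exp (n : nat) (b : 'I_n -> bool) (y : 'I_n -> R) l :
  (forall i, 0 <= y i) -> 0 < l ->
  (\prod_(i < n) \int[mu]_(w in Bset (b i) (y i)) (exponential_pdf l w)%:E)%E
   = (expR (- l * \sum_(i < n) (b i)%:R * y i))%:E.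
Proof.
move=> y0 l0; rewrite mulr_sumr expR_sum -prodEFin; apply: eq_bigr => i _.
rewrite /Bset; case: (b i).
  by rewrite exp_tail // mul1r.
by rewrite integral_exponential_pdf // mul0r mulr0 expR0.
Qed.

Lemma q01 (x : \bar R) : (((fine x)^-1)%:E * x = 0 \/ ((fine x)^-1)%:E * x = 1)%E.
Proof.
case: x => [r| |] /=.
- have [->|r0] := eqVneq r 0; first by left; rewrite invr0 mul0e.
  by right; rewrite -EFinM mulVf.
- by left; rewrite invr0 mul0e.
- by left; rewrite invr0 mul0e.
Qed.
End aux2.
End Aux.
Import Aux.

Theorem theorem4p1 (R : realType) (d : measure_display) (T : measurableType d)
  (P : probability T R) (n : nat)
  (c : 'I_n -> 'I_n.+1 -> bool)
  (sigma : 'I_n -> R) (gam : 'I_n.+1 -> R)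
  (Lam : 'I_n.+1 -> {RV P >-> R})
  (W : 'I_n -> 'I_n.+1 -> {RV P >-> R}) :
  (forall i, 0 < sigma i) ->
  (forall j, 0 < gam j) ->
  (forall i, 0 < \sum_(j < n.+1) (c i j)%:R * gam j) ->
  (* joint law of (Lam, W): the Lam_j are independent Ga(gam_j, 1), and
     conditionally on Lam = lam the W_{i,j} are independent Exp(lam_j) *)
  (forall (A : 'I_n.+1 -> set R) (B : 'I_n -> 'I_n.+1 -> set R),
     (forall j, measurable (A j)) -> (forall i j, measurable (B i j)) ->
     P [set t | (forall j, A j (Lam j t)) /\ (forall i j, B i j (W i j t))] =
     (\prod_(j < n.+1)
        \int[lebesgue_measure]_(l in A j)
          ((gamma_pdf (gam j) l)%:E *
           \prod_(i < n)
             \int[lebesgue_measure]_(w in B i j) (exponential_pdf l w)%:E))%E) ->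
  let X := fun (i : 'I_n) (t : T) =>
    ((sigma i)%:E * \big[Order.min/+oo]_(j < n.+1 | c i j) (W i j t)%:E)%E in
  forall x : 'I_n -> R, (forall i, 0 < x i) ->
    P [set t | forall i, ((x i)%:E < X i t)%E] =
    (\prod_(j < n.+1)
       (1 + \sum_(i < n) (c i j)%:R / sigma i * x i) `^ (- gam j))%:E.
Proof.
move=> sig0 gam0 _ Hlaw X x x0.
have key : forall (b : 'I_n -> 'I_n.+1 -> bool) (y : 'I_n -> R), (forall i, 0 <= y i) ->
  P [set t | (forall j, [set: R] (Lam j t)) /\ (forall i j, Bset (b i j) (y i) (W i j t))] =
  (\prod_(j < n.+1) (((Gamma_fun (gam j))^-1 *
     (1 + \sum_(i < n) (b i j)%:R * y i) `^ (- gam j))%:E * II (gam j)))%E.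
  move=> b y y0.
  rewrite (Hlaw (fun _ => setT) (fun i j => Bset (b i j) (y i))) //; last first.
    by move=> i j; exact: measurable_Bset.
  apply: eq_bigr => j _.
  apply: factor_int.
  - by apply: sumr_ge0 => i _; rewrite mulr_ge0 ?ler0n.
  - move=> l l0; have h := (prod_exp n (fun i => b i j) y l y0 l0). exact: h.
have q1 : forall j, (((fine (II (gam j)))^-1)%:E * II (gam j) = 1)%E.
  have := key (fun _ _ => false) (fun _ => 0) (fun _ => lexx 0).
  rewrite (_ : [set t | _] = setT); last by apply/seteqP; split.
  rewrite probability_setT.
  have E : forall j : 'I_n.+1, (((Gamma_fun (gam j))^-1 *
     (1 + \sum_(i < n) (false)%:R * (0:R)) `^ (- gam j))%:E * II (gam j) =
     ((fine (II (gam j)))^-1)%:E * II (gam j))%E.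
    move=> j; rewrite big1 ?addr0 ?powR1 ?mulr1 ?Gamma_hh //.
    by move=> i _; rewrite mul0r.
  rewrite (eq_bigr _ (fun j _ => E j)) => h j.
  case: (q01 (II (gam j))) => // hj0.
  move: h; rewrite (bigD1 j) //= hj0 mul0e => h.
  by move: (@lte01 R); rewrite -h ltxx.
have ev : [set t | forall i, ((x i)%:E < X i t)%E] =
  [set t | (forall j, [set: R] (Lam j t)) /\
           (forall i j, Bset (c i j) (x i / sigma i) (W i j t))].
  apply/seteqP; split => t /=.
    move=> H; split => // i j; have := H i.
    rewrite /X -lte_pdivrMl // -EFinM => /bigmin_gtP [_ Hj].
    rewrite /Bset; case: ifP => // cij; have := Hj j cij.
    by rewrite lte_fin /= in_itv /= andbT mulrC.
  move=> [_ H] i; rewrite /X -lte_pdivrMl // -EFinM; apply/bigmin_gtP; split.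
    exact: ltry.
  move=> j cij; have := H i j; rewrite /Bset cij /= in_itv /= andbT.
  by rewrite lte_fin mulrC.
rewrite ev key; last by move=> i; rewrite divr_ge0 // ltW.
rewrite -prodEFin; apply: eq_bigr => j _.
rewrite EFinM -muleA Gamma_hh muleCA q1 mule1; congr (_ `^ _)%:E; congr (_ + _).
by apply: eq_bigr => i _; rewrite mulrA mulrAC.
Qed.
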